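(* Let $\mathcal{O}$ be a homogeneous and finitely generated operad. In the prefix poset of $\mathcal{O}$, for all $x,y\in\mathcal{O}$, $x\preceq y$ if and only if $x$ is a prefix of $y$, i.e. there exist $z_1,\dots,z_{|x|}\in\mathcal{O}$ with $y=x\circ[z_1,\dots,z_{|x|}]$. Moreover, $y$ covers $x$ if and only if there exist $\mathtt{a}\in\mathfrak{G}_\mathcal{O}$ and $i\in[|x|]$ such that $y=x\circ_i\mathtt{a}$.
   Context: Operads are nonsymmetric set-operads: graded sets $\mathcal{O}=\bigsqcup_n\mathcal{O}(n)$ (arity $|x|=n$ for $x\in\mathcal{O}(n)$) with partial compositions $\circ_i:\mathcal{O}(n)\times\mathcal{O}(m)\to\mathcal{O}(n+m-1)$, $i\in[n]$, and unit $\mathbf{1}\in\mathcal{O}(1)$, satisfying the usual associativity, commutativity and unit axioms. The full composition is $x\circ[z_1,\dots,z_n]=(\cdots((x\circ_n z_n)\circ_{n-1}z_{n-1})\cdots)\circ_1 z_1$ for $x\in\mathcal{O}(n)$. If $\mathcal{O}(0)=\emptyset$ and $\mathcal{O}(1)=\{\mathbf{1}\}$, $\mathcal{O}$ has a unique minimal generating set $\mathfrak{G}_\mathcal{O}$. A treelike expression of $x$ is a planar rooted tree with internal nodes decorated by elements of $\mathfrak{G}_\mathcal{O}$ (arity matching) evaluating to $x$ in $\mathcal{O}$. $\mathcal{O}$ is homogeneous if $\mathcal{O}(0)=\emptyset$, $\mathcal{O}(1)=\{\mathbf{1}\}$, and all treelike expressions of any given element have the same number of internal nodes (its degree); it is finitely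 generated if $\mathfrak{G}_\mathcal{O}$ is finite. The prefix poset of $\mathcal{O}$ is $\mathcal{O}$ ordered by $x\preceq y$ iff $y=(\cdots((x\circ_{i_1}\mathtt{a}_1)\circ_{i_2}\mathtt{a}_2)\cdots)\circ_{i_k}\mathtt{a}_k$ for some $k\ge0$, $\mathtt{a}_j\in\mathfrak{G}_\mathcal{O}$ and positive integers $i_j$. *)

(* Defs.v *)
From mathcomp Require Import all_boot.
Set Implicit Arguments. Unset Strict Implicit. Unset Printing Implicit Defensive.

(* Positions are 1-based. *)
Record operad := Operad {
  carrier :> Type;
  arity : carrier -> nat;
  ocomp : nat -> carrier -> carrier -> carrier;
  ounit : carrier;
  arity_unit : arity ounit = 1;
  arity_comp : forall i x y, 1 <= i <= arity x ->
      arity (ocomp i x y) = arity x + arity y - 1;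
  comp_assoc : forall x y z i j, 1 <= i <= arity x -> 1 <= j <= arity y ->
      ocomp (i + j - 1) (ocomp i x y) z = ocomp i x (ocomp j y z);
  comp_comm : forall x y z i j, 1 <= i -> i < j -> j <= arity x ->
      ocomp (j + arity y - 1) (ocomp i x y) z = ocomp i (ocomp j x z) y;
  comp_unit_l : forall x, ocomp 1 ounit x = x;
  comp_unit_r : forall x i, 1 <= i <= arity x -> ocomp i x ounit = x
}.

Section Defs.
Variable O : operad.
Implicit Types (x y z : O) (G : O -> Prop).

(* Full composition x o [z_1, ..., z_n]
   = (...((x o_n z_n) o_{n-1} z_{n-1}) ...) o_1 z_1. *)
Fixpoint fcomp_from (i : nat) (x : O) (zs : seq O) : O :=
  match zs with
  | [::] => x
  | z :: zs' => ocomp i (fcomp_from i.+1 x zs') z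
  end.
Definition full_comp (x : O) (zs : seq O) : O := fcomp_from 1 x zs.

Inductive generated G : O -> Prop :=
| gen_unit : generated G (ounit O)
| gen_base a : G a -> generated G a
| gen_comp i x y : generated G x -> generated G y -> 1 <= i <= arity x ->
    generated G (ocomp i x y).

Definition generating_set G : Prop := forall x, generated G x.

Definition min_generating_set G : Prop :=
  generating_set G /\
  forall G', (forall a, G' a -> G a) -> generating_set G' ->
    forall a, G a -> G' a.

Fixpoint in_list (a : O) (s : seq O) : Prop :=
  match s with [::] => False | b :: s' => b = a \/ in_list a s' end.

Definition finite_set G : Prop := exists s : seq O, forall a, G a <-> in_list a s.

Inductive tree : Type :=
| Leaf : tree
| Node : O -> seq tree -> tree.

Fixpoint eval_tree (t : tree) : O :=
  match t with
  | Leaf => ounit O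
  | Node a ts => full_comp a (map eval_tree ts)
  end.

Fixpoint wf_tree G (t : tree) : Prop :=
  match t with
  | Leaf => True
  | Node a ts => G a /\ size ts = arity a /\
      (fix wfl (l : seq tree) : Prop :=
         match l with [::] => True | t' :: l' => wf_tree G t' /\ wfl l' end) ts
  end.

Fixpoint nodes (t : tree) : nat :=
  match t with
  | Leaf => 0
  | Node _ ts => (sumn (map nodes ts)).+1
  end.

Definition homogeneous G : Prop :=
  (forall x, arity x <> 0) /\
  (forall x, arity x = 1 -> x = ounit O) /\
  (forall t1 t2, wf_tree G t1 -> wf_tree G t2 -> eval_tree t1 = eval_tree t2 ->
     nodes t1 = nodes t2).

Inductive prefix_le G (x : O) : O -> Prop :=
| pre_refl : prefix_le G x x
| pre_step y a i : prefix_le G x y -> G a -> 1 <= i <= arity y ->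
    prefix_le G x (ocomp i y a).

Definition is_prefix (x y : O) : Prop :=
  exists zs : seq O, size zs = arity x /\ y = full_comp x zs.

Definition covers (le : O -> O -> Prop) (x y : O) : Prop :=
  le x y /\ x <> y /\ forall z, le x z -> le z y -> z = x \/ z = y.

End Defs.

(* Main.v *)
Require Import Defs.
From mathcomp Require Import all_boot.
From mathcomp Require Import zify.
From Stdlib Require Import Classical.

Set Implicit Arguments.
Section Proofs.
Variable O : operad.
Variable G : O -> Prop.
Hypothesis Hpos : forall x : O, 0 < arity x.

Lemma fcomp_arity_ge (zs : seq O) : forall p (x : O), 1 <= p -> p + size zs <= arity x + 1 ->
  arity x <= arity (fcomp_from p x zs).
Proof.
elim: zs => [|z zs IH] p x Hp Hs //=.
have := IH p.+1 x ltac:(lia) ltac:(simpl in Hs; lia).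
move=> H.
rewrite arity_comp; last (simpl in Hs; apply/andP; split; lia).
have := Hpos z. lia.
Qed.

Lemma fcomp_nseq n : forall p (x : O), 1 <= p -> p + n <= arity x + 1 ->
  fcomp_from p x (nseq n (ounit O)) = x.
Proof.
elim: n => [|n IH] p x Hp Hs //=.
rewrite IH; [|lia|lia].
apply: comp_unit_r; apply/andP; split; lia.
Qed.

Lemma KL (zs : seq O) : forall p (x : O) i (y : O), 1 <= p -> p + size zs = arity x + 1 ->
  p <= i <= arity (fcomp_from p x zs) ->
  exists k j, k < size zs /\ 1 <= j <= arity (nth (ounit O) zs k) /\
   ocomp i (fcomp_from p x zs) y =
   fcomp_from p x (set_nth (ounit O) zs k (ocomp j (nth (ounit O) zs k) y)).
Proof.
elim: zs => [|z zs IH] p x i y Hp Hs Hi.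
  simpl in Hs, Hi. lia.
simpl in Hs, Hi |- *.
set w := fcomp_from p.+1 x zs in Hi *.
have Hw : arity x <= arity w by apply: fcomp_arity_ge; lia.
have Hpw : 1 <= p <= arity w by apply/andP; split; lia.
rewrite arity_comp // in Hi.
have Hz := Hpos z.
case: (ltnP i (p + arity z)) => Hiz.
  exists 0, (i - p + 1); split => //; split => /=.
    apply/andP; split; lia.
  rewrite -comp_assoc //; last (apply/andP; split; lia).
  by have -> : p + (i - p + 1) - 1 = i by lia.
have [k [j [Hk [Hj E]]]] := IH p.+1 x (i - arity z + 1) y ltac:(lia) ltac:(lia)
  ltac:(rewrite -/w; apply/andP; split; lia).
exists k.+1, j; split => //; split => //=.
have Ei : i = (i - arity z + 1) + arity z - 1 by lia.
rewrite -E {1}Ei comp_comm //; [lia|rewrite -/w; lia].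
Qed.

Lemma prefix_trans (x y z : O) : prefix_le G x y -> prefix_le G y z -> prefix_le G x z.
Proof.
move=> H1 H2; elim: H2 => [|w a i _ IH Ga Hi]; first exact: H1.
exact: pre_step.
Qed.

Lemma prefix_lift (u w v : O) p : 1 <= p <= arity u -> prefix_le G w v ->
  prefix_le G (ocomp p u w) (ocomp p u v).
Proof.
move=> Hp H; elim: H => [|v' a i H IH Ga Hi]; first exact: pre_refl.
rewrite -comp_assoc //.
apply: pre_step => //.
rewrite arity_comp //. have ha := Hpos a. have hv := Hpos v'. apply/andP; split; lia.
Qed.

Lemma prefix_from_unit : (forall x, generated G x) -> forall z, prefix_le G (ounit O) z.
Proof.
move=> Hgen z; elim: (Hgen z) => [|a Ga|i x y _ IHx _ IHy Hi].
- exact: pre_refl.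
- rewrite -(comp_unit_l a); apply: pre_step => //; first exact: pre_refl.
  by rewrite arity_unit.
- apply: (prefix_trans IHx).
  rewrite -{1}(comp_unit_r Hi). exact: prefix_lift.
Qed.

Lemma prefix_fcomp (Hu : forall z, prefix_le G (ounit O) z) (zs : seq O) :
  forall p (x : O), 1 <= p -> p + size zs <= arity x + 1 ->
  prefix_le G x (fcomp_from p x zs).
Proof.
elim: zs => [|z zs IH] p x Hp Hs /=; first exact: pre_refl.
simpl in Hs.
set w := fcomp_from p.+1 x zs.
have Hw : arity x <= arity w by apply: fcomp_arity_ge; lia.
have Hpw : 1 <= p <= arity w by apply/andP; split; lia.
apply: (prefix_trans (IH p.+1 x ltac:(lia) ltac:(lia))).
rewrite -/w -{1}(comp_unit_r Hpw). exact: prefix_lift.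
Qed.

Lemma map_set_nth_t (A B : Type) (f : A -> B) x0 (s : seq A) k y :
  map f (set_nth x0 s k y) = set_nth (f x0) (map f s) k (f y).
Proof. by elim: s k => [|a s IH] [|k] //=; [elim: k => //= k -> | rewrite IH]. Qed.

Fixpoint wfl (l : seq (tree O)) : Prop :=
  match l with [::] => True | t' :: l' => wf_tree G t' /\ wfl l' end.

Lemma wf_node a ts : wf_tree G (Node a ts) <-> G a /\ size ts = arity a /\ wfl ts.
Proof. by []. Qed.

Lemma wflP ts : wfl ts <-> forall k, k < size ts -> wf_tree G (nth (Leaf O) ts k).
Proof.
elim: ts => [|t ts IH] /=; first by split.
split.
  move=> [H1 /IH H2] [|k] //= Hk. by apply: H2.
move=> H; split; first exact: (H 0).
apply/IH => k Hk; exact: (H k.+1).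
Qed.

Lemma sumn_set_nth_t ts k u : k < size ts ->
  sumn (map (@nodes O) (set_nth (Leaf O) ts k u)) + nodes (nth (Leaf O) ts k) =
  sumn (map (@nodes O) ts) + nodes u.
Proof.
elim: ts k => [|t ts IH] [|k] //= Hk.
  lia.
have := IH k Hk. lia.
Qed.

Lemma graft_aux n : forall t s i, nodes t <= n -> wf_tree G t -> wf_tree G s ->
  1 <= i <= arity (eval_tree t) ->
  exists u, wf_tree G u /\ eval_tree u = ocomp i (eval_tree t) (eval_tree s) /\
    nodes u = nodes t + nodes s.
Proof.
elim: n => [|n IH] [|a ts] s i Hn Ht Hs Hi /=.
- exists s; split => //; split => //.
  simpl in Hi; rewrite arity_unit in Hi. have -> : i = 1 by lia.
  by rewrite comp_unit_l.
- simpl in Hn; lia.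
- exists s; split => //; split => //.
  simpl in Hi; rewrite arity_unit in Hi. have -> : i = 1 by lia.
  by rewrite comp_unit_l.
- move: Ht => /wf_node [Ga [Hsz /wflP Hwl]].
  simpl in Hi.
  have := @KL (map (@eval_tree O) ts) 1 a i (eval_tree s) (erefl _)
    ltac:(rewrite size_map Hsz; lia) Hi.
  move=> [k [j [Hk [Hj E]]]].
  rewrite size_map in Hk.
  rewrite (nth_map (Leaf O)) // in Hj E.
  have Hkn : nodes (nth (Leaf O) ts k) <= n.
    simpl in Hn.
    have : nodes (nth (Leaf O) ts k) <= sumn (map (@nodes O) ts).
      rewrite -(nth_map (Leaf O) 0) //.
      elim: (map _ ts) k {Hk E Hj} => [|m ms IHm] [|k] //=.
        lia.
      have := IHm k. lia.
    lia.
  have [u [Hwu [Eu Nu]]] := IH _ s j Hkn (Hwl k Hk) Hs Hj.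
  exists (Node a (set_nth (Leaf O) ts k u)).
  split; [|split].
  + apply/wf_node; split => //; split.
      by rewrite size_set_nth; apply/eqP; rewrite -Hsz; apply/eqP; lia.
    apply/wflP => k'; rewrite size_set_nth nth_set_nth /= => Hk'.
    case: eqP => _ //. apply: Hwl. lia.
  + rewrite /= /full_comp E map_set_nth_t /=. by rewrite -Eu.
  + have := @sumn_set_nth_t ts k u Hk. simpl. lia.
Qed.

Lemma graft t s i : wf_tree G t -> wf_tree G s ->
  1 <= i <= arity (eval_tree t) ->
  exists u, wf_tree G u /\ eval_tree u = ocomp i (eval_tree t) (eval_tree s) /\
    nodes u = nodes t + nodes s.
Proof. exact: (@graft_aux (nodes t)). Qed.

Definition gtree (a : O) := Node a (nseq (arity a) (Leaf O)).

Lemma gtree_ok a : G a -> wf_tree G (gtree a) /\ eval_tree (gtree a) = a /\ nodes (gtree a) = 1.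
Proof.
move=> Ga; split; [|split].
- apply/wf_node; split => //; split; first by rewrite size_nseq.
  apply/wflP => k; rewrite size_nseq nth_nseq => ->. by [].
- rewrite /= /full_comp map_nseq /=. apply: fcomp_nseq; lia.
- rewrite /= map_nseq sumn_nseq /=. lia.
Qed.

Lemma tree_ex : (forall x, generated G x) -> forall x, exists t, wf_tree G t /\ eval_tree t = x.
Proof.
move=> Hgen x; elim: (Hgen x) => [|a Ga|i y z _ [ty [Hy Ey]] _ [tz [Hz Ez]] Hi].
- by exists (Leaf O).
- exists (gtree a). by have [? [? _]] := gtree_ok Ga.
- have [u [Hu [Eu _]]] := @graft ty tz i Hy Hz ltac:(by rewrite Ey).
  exists u; split => //. by rewrite Eu Ey Ez.
Qed.

Definition tdeg (x : O) n := exists t, wf_tree G t /\ eval_tree t = x /\ nodes t = n.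

Hypothesis Hhom : forall t1 t2, wf_tree G t1 -> wf_tree G t2 -> eval_tree t1 = eval_tree t2 ->
     nodes t1 = nodes t2.
Hypothesis Hgen : forall x, generated G x.

Lemma tdeg_ex x : exists n, tdeg x n.
Proof. have [t [H E]] := tree_ex Hgen x. by exists (nodes t), t. Qed.

Lemma tdeg_uniq x n m : tdeg x n -> tdeg x m -> n = m.
Proof.
move=> [t1 [H1 [E1 N1]]] [t2 [H2 [E2 N2]]].
rewrite -N1 -N2. apply: Hhom => //. by rewrite E1 E2.
Qed.

Lemma tdeg_step x n a i : tdeg x n -> G a -> 1 <= i <= arity x -> tdeg (ocomp i x a) n.+1.
Proof.
move=> [t [H [E N]]] Ga Hi.
have [Hg [Eg Ng]] := gtree_ok Ga.
have [u [Hu [Eu Nu]]] := @graft t (gtree a) i H Hg ltac:(by rewrite E).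
exists u; split => //; split; first by rewrite Eu E Eg.
rewrite Nu N Ng. lia.
Qed.
Arguments tdeg_step {x n a i}.

Lemma prefix_deg x y : prefix_le G x y -> forall n m, tdeg x n -> tdeg y m ->
  n <= m /\ (n = m -> x = y).
Proof.
elim => [|y' a i H IH Ga Hi] n m Hx Hy.
  have E := tdeg_uniq Hx Hy. split => //. lia.
have [m' Hm'] := tdeg_ex y'.
have := tdeg_uniq Hy (tdeg_step Hm' Ga Hi).
have := IH n m' Hx Hm'. lia.
Qed.

Lemma first_step x y : prefix_le G x y -> x <> y ->
  exists b j, G b /\ 1 <= j <= arity x /\ prefix_le G (ocomp j x b) y.
Proof.
elim => [|y' a i H IH Ga Hi] Hne; first by [].
case: (classic (x = y')) => [E|E].
  subst y'. exists a, i; split => //; split => //. exact: pre_refl.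
have [b [j [Gb [Hj Hp]]]] := IH E.
exists b, j; split => //; split => //. exact: pre_step.
Qed.

End Proofs.
Arguments tdeg_step {O G} Hpos {x n a i}.
Unset Implicit Arguments.

Theorem proposition4p5 (O : operad) (G : O -> Prop) :
  min_generating_set G -> finite_set G -> homogeneous G ->
  (forall x y : O, prefix_le G x y <-> is_prefix x y) /\
  (forall x y : O, covers (prefix_le G) x y <->
     exists a i, G a /\ 1 <= i <= arity x /\ y = ocomp i x a).
Proof.
move=> [Hgen _] _ [Hnz [_ Hhom]].
have Hpos : forall x : O, 0 < arity x.
  move=> x; have := Hnz x; lia.
split.
- move=> x y; split.
  + elim => [|y' a i _ [zs [Hsz E]] Ga Hi].
      exists (nseq (arity x) (ounit O)); split; first by rewrite size_nseq.
      rewrite /full_comp fcomp_nseq //; lia.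
    rewrite E /full_comp in Hi.
    have [k [j [Hk [Hj E']]]] := @KL O Hpos zs 1 x i a (erefl _) ltac:(lia) Hi.
    exists (set_nth (ounit O) zs k (ocomp j (nth (ounit O) zs k) a)); split.
      rewrite size_set_nth; lia.
    by rewrite E /full_comp E'.
  + move=> [zs [Hsz ->]].
    apply: (prefix_fcomp Hpos (prefix_from_unit Hpos Hgen)); lia.
- move=> x y; split.
  + move=> [Hle [Hne Hz]].
    have [b [j [Gb [Hj Hp]]]] := first_step Hle Hne.
    have Hxz : prefix_le G x (ocomp j x b) by apply: pre_step => //; exact: pre_refl.
    case: (Hz _ Hxz Hp) => E.
      have [n Hn] := tdeg_ex Hpos Hgen x.
      have Hn1 := tdeg_step Hpos Hn Gb Hj.
      rewrite E in Hn1. have := tdeg_uniq Hhom Hn Hn1. lia.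
    by exists b, j.
  + move=> [a [i [Ga [Hi ->]]]].
    have Hxy : prefix_le G x (ocomp i x a) by apply: pre_step => //; exact: pre_refl.
    have [n Hn] := tdeg_ex Hpos Hgen x.
    have Hn1 := tdeg_step Hpos Hn Ga Hi.
    split => //; split.
      move=> E; rewrite -E in Hn1. have := tdeg_uniq Hhom Hn Hn1. lia.
    move=> z H1 H2.
    have [k Hk] := tdeg_ex Hpos Hgen z.
    have [l1 e1] := prefix_deg Hpos Hhom Hgen H1 Hn Hk.
    have [l2 e2] := prefix_deg Hpos Hhom Hgen H2 Hk Hn1.
    case: (ltnP n k) => Hnk.
      right; apply: e2; lia.
    left; symmetry; apply: e1; lia.
Qed.
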